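(* Let $\ell,k\in\mathbb{Z}_{>0}$, let $D\subseteq\mathbb{R}^\ell$ be convex and $\sigma:\mathbb{R}^\ell\to\mathbb{R}^k$ affine, and set $D_\sigma:=\operatorname{conv}(D\cap\sigma^{-1}(\mathbb{Z}^k))$. If $\operatorname{rdist}(D_\sigma,D)=\delta>0$, then $\operatorname{width}(\sigma(D_\sigma))\leq\frac{1+\delta}{\delta}\operatorname{Flt}(k)$.
   Context: For $B\subseteq\mathbb{R}^k$, $\operatorname{width}(B)=\inf_{v\in\mathbb{Z}^k\setminus\{0\}}\big(\sup_{x\in B}v^\intercal x-\inf_{x\in B}v^\intercal x\big)$. $\operatorname{Flt}(k)$ is the smallest $\lambda\geq0$ such that every convex, closed, full-dimensional $B\subseteq\mathbb{R}^k$ with $B\cap\mathbb{Z}^k=\emptyset$ satisfies $\operatorname{width}(B)\leq\lambda$. For convex $A\subseteq B\subseteq\mathbb{R}^\ell$, $\operatorname{rdist}(A,B)=\sup_{\pi}\frac{\sup_{b\in B}\inf_{a\in A}|\pi(b)-\pi(a)|}{\sup_{a,a'\in A}|\pi(a)-\pi(a')|}$ over linear $\pi:\mathbb{R}^\ell\to\mathbb{R}$ (denominator $\infty$ and $0/0$ read as $0$; $\operatorname{rdist}(\emptyset,\emptyset)=0$, $\operatorname{rdist}(\emptyset,B)=\infty$ for $B\ne\emptyset$). *)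

(* Defs.v *)
From HB Require Import structures.
From mathcomp Require Import all_boot all_order all_algebra.
From mathcomp Require Import all_classical all_reals all_analysis.
Set Implicit Arguments. Unset Strict Implicit. Unset Printing Implicit Defensive.
Import Order.TTheory GRing.Theory Num.Theory numFieldNormedType.Exports.
Local Open Scope classical_set_scope.
Local Open Scope ring_scope.

Section Defs.
Variable R : realType.

Definition Zlattice (k : nat) : set 'rV[R]_k :=
  [set x | forall i : 'I_k, x ord0 i \is a Num.int].

Definition idot (k : nat) (v : 'rV[int]_k) (x : 'rV[R]_k) : R :=
  \sum_(i < k) (v ord0 i)%:~R * x ord0 i.

Definition width (k : nat) (B : set 'rV[R]_k) : \bar R :=
  ereal_inf [set (ereal_sup [set (idot v x)%:E | x in B]
                  - ereal_inf [set (idot v x)%:E | x in B])%E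
            | v in [set v : 'rV[int]_k | v != 0]].

(* Flt(k): the smallest lambda >= 0 such that every convex, closed,
   full-dimensional (nonempty interior) lattice-free B has width <= lambda.
   (Infimum in \bar R; +oo if no such real lambda exists.) *)
Definition Flt (k : nat) : \bar R :=
  ereal_inf [set lam%:E | lam in
    [set lam : R | 0 <= lam /\
      forall B : set 'rV[R]_k,
        convex_set (B : set (convex_lmodType 'rV[R]_k)) -> closed B ->
        interior B !=set0 -> B `&` @Zlattice k = set0 ->
        (width B <= lam%:E)%E]].

Definition convhull (l : nat) (S : set 'rV[R]_l) : set 'rV[R]_l :=
  \bigcap_(C in [set C : set 'rV[R]_l |
                  convex_set (C : set (convex_lmodType 'rV[R]_l)) /\ S `<=` C]) C.

(* The ratio for a fixed linear functional pi, with the conventions: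
   denominator +oo gives 0, 0/0 gives 0 (and c/0 = +oo for c > 0). *)
Definition rdist_ratio (l : nat) (A B : set 'rV[R]_l)
    (pi : {linear 'rV[R]_l -> R^o}) : \bar R :=
  let num := ereal_sup [set ereal_inf [set (`|pi b - pi a|)%:E | a in A]
                       | b in B] in
  let den := ereal_sup [set (`|pi a - pi a'|)%:E
                       | a in A & a' in A] in
  if den == +oo%E then 0%E
  else if den == 0%E then (if num == 0%E then 0%E else +oo%E)
  else (num * ((fine den)^-1)%:E)%E.

(* rdist(A,B), with rdist(empty,empty) = 0 and rdist(empty,B) = +oo for B nonempty. *)
Definition rdist (l : nat) (A B : set 'rV[R]_l) : \bar R :=
  if `[< A = set0 >] then (if `[< B = set0 >] then 0%E else +oo%E)
  else ereal_sup [set rdist_ratio A B pi | pi in [set: {linear 'rV[R]_l -> R^o}]].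

Definition affine_map (l k : nat) (sigma : 'rV[R]_l -> 'rV[R]_k) : Prop :=
  exists (M : 'M[R]_(l, k)) (b : 'rV[R]_k), forall x, sigma x = x *m M + b.

End Defs.

Arguments Zlattice {R} k.
Arguments Flt {R} k.
Arguments width {R k} B.
Arguments convhull {R l} S.
Arguments rdist {R l} A B.
Arguments affine_map {R l k} sigma.

(* Main.v *)
Require Import Defs.
From HB Require Import structures.
From mathcomp Require Import all_boot all_order all_algebra.
From mathcomp Require Import all_classical all_reals all_analysis.
From mathcomp Require Import ring lra.
Import Order.TTheory GRing.Theory Num.Theory numFieldNormedType.Exports.
Local Open Scope classical_set_scope.
Local Open Scope ring_scope.
Section H.
Set Implicit Arguments. Unset Strict Implicit.
Variable R : realType.
Definition cvx k (A : set 'rV[R]_k) := forall x y (t : R), A x -> A y -> 0 <= t -> t <= 1 -> A (t *: x + (1 - t) *: y).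

Lemma ballE k (x y : 'rV[R]_k) e : ball x e y <-> `|x - y| < e.
Proof. by rewrite -ball_normE. Qed.

Lemma intcl k (V : set 'rV[R]_k) c r y t : cvx V -> 0 < r ->
  (forall z, `|c - z| < r -> V z) ->
  (forall e, 0 < e -> exists2 y', V y' & `|y - y'| < e) -> 0 < t -> t < 1 ->
  V (c + t *: (y - c)).
Proof.
move=> cV r0 hb hy t0 t1.
have t1' : 0 < 1 - t by rewrite subr_gt0.
have [y' Vy' hy'] := hy (r * (1 - t) / t) (divr_gt0 (mulr_gt0 r0 t1') t0).
pose w := c + (t / (1 - t)) *: (y - y').
have Vw : V w.
  apply: hb; rewrite /w opprD addrA subrr add0r normrN normrZ.
  rewrite ger0_norm ?divr_ge0 ?ltW //.
  rewrite mulrC -ltr_pdivlMr ?divr_gt0 //.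
  by rewrite invf_div mulrA.
have -> : c + t *: (y - c) = t *: y' + (1 - t) *: w.
  apply/rowP => j; rewrite !mxE /=; field.
  by rewrite gt_eqF.
exact: (cV _ _ _ Vy' Vw (ltW t0) (ltW t1)).
Qed.

Definition validB k (B : set 'rV[R]_k) :=
  [/\ convex_set (B : set (convex_lmodType 'rV[R]_k)), closed B,
      interior B !=set0 & B `&` Zlattice k = set0].

Lemma convexP n (A : set 'rV[R]_n) :
  convex_set (A : set (convex_lmodType 'rV[R]_n)) <-> cvx A.
Proof.
split.
- move=> cA x y t Ax Ay t0 t1.
  have := cA x y (Itv01 t0 t1); rewrite !inE => /(_ Ax Ay).
  by [].
- move=> H x y l; rewrite !inE => Ax Ay.
  exact: (H x y (l%:num) Ax Ay (ge0 l) (le1 l)).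
Qed.

Lemma convhull_sub n (S : set 'rV[R]_n) : S `<=` convhull S.
Proof. by move=> x Sx C [_ SC]; exact: SC. Qed.

Lemma convhull_min n (S C : set 'rV[R]_n) :
  convex_set (C : set (convex_lmodType 'rV[R]_n)) -> S `<=` C -> convhull S `<=` C.
Proof. by move=> cC SC x; apply; split. Qed.

Lemma convhull_convex n (S : set 'rV[R]_n) :
  convex_set (convhull S : set (convex_lmodType 'rV[R]_n)).
Proof.
apply/convexP => x y t hx hy t0 t1 C [cC SC].
have cC' := cC; move/convexP: cC' => cC'.
apply: cC' => //; [exact: hx|exact: hy].
Qed.

Lemma idotD k (v : 'rV[int]_k) (x y : 'rV[R]_k) : idot v (x + y) = idot v x + idot v y.
Proof. by rewrite /idot -big_split; apply: eq_bigr => i _; rewrite mxE mulrDr. Qed.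

Lemma idotZ k (v : 'rV[int]_k) (a : R) (x : 'rV[R]_k) : idot v (a *: x) = a * idot v x.
Proof. by rewrite /idot mulr_sumr; apply: eq_bigr => i _; rewrite mxE mulrCA. Qed.

Lemma idotN k (v : 'rV[int]_k) (x : 'rV[R]_k) : idot v (- x) = - idot v x.
Proof. by rewrite -scaleN1r idotZ mulN1r. Qed.

Lemma idotB k (v : 'rV[int]_k) (x y : 'rV[R]_k) : idot v (x - y) = idot v x - idot v y.
Proof. by rewrite idotD idotN. Qed.

Definition supv k (v : 'rV[int]_k) (X : set 'rV[R]_k) := ereal_sup [set (idot v x)%:E | x in X].
Definition infv k (v : 'rV[int]_k) (X : set 'rV[R]_k) := ereal_inf [set (idot v x)%:E | x in X].

Lemma widthE k (B : set 'rV[R]_k) :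
  width B = ereal_inf [set (supv v B - infv v B)%E | v in [set v : 'rV[int]_k | v != 0]].
Proof. by []. Qed.

Lemma diam_le k (X : set 'rV[R]_k) (v : 'rV[int]_k) (c : R) : X !=set0 ->
  (forall x1 x2, X x1 -> X x2 -> idot v x1 - idot v x2 <= c) ->
  (supv v X - infv v X <= c%:E)%E.
Proof.
move=> [x0 X0] H.
have lb : forall x1, X x1 -> ((idot v x1 - c)%:E <= infv v X)%E.
  move=> x1 X1; apply: le_ereal_inf_tmp => _ [x2 X2 <-]; rewrite lee_fin.
  by rewrite lerBlDr addrC -lerBlDr; exact: H.
have ub : (infv v X <= (idot v x0)%:E)%E.
  by apply: ereal_inf_lbound; exists x0.
have fin : infv v X \is a fin_num.
  rewrite fin_numElt; apply/andP; split.
    by apply: (lt_le_trans _ (lb x0 X0)); rewrite ltNyr.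
  by apply: (le_lt_trans ub); rewrite ltry.
have hi : infv v X = (fine (infv v X))%:E by rewrite fineK.
move: (fine _) hi lb => i -> lb.
rewrite leeBlDr //; apply: ge_ereal_sup => _ [x1 X1 <-].
rewrite -EFinD lee_fin addrC -lerBlDr.
by have := lb x1 X1; rewrite lee_fin.
Qed.

Lemma width_scale_le k (U B : set 'rV[R]_k) (z : 'rV[R]_k) (s f : R) :
  0 < s -> U !=set0 -> (forall u, U u -> B (z + s *: u)) ->
  (width B <= f%:E)%E -> (width U <= (f / s)%:E)%E.
Proof.
move=> s0 U0 UB wB; apply/lee_addgt0Pr => e e0.
have : (width B < (f + s * e)%:E)%E.
  by apply: (le_lt_trans wB); rewrite lte_fin ltrDl mulr_gt0.
case/ereal_inf_lt => _ [v v0 <-] hv.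
apply: (le_trans (ereal_inf_lbound _)); first by exists v.
rewrite -EFinD; apply: diam_le => // u1 u2 U1 U2.
have h1 : ((idot v (z + s *: u1))%:E <= supv v B)%E.
  by apply: ereal_sup_ubound; exists (z + s *: u1) => //; exact: UB.
have h2 : (infv v B <= (idot v (z + s *: u2))%:E)%E.
  by apply: ereal_inf_lbound; exists (z + s *: u2) => //; exact: UB.
have := le_lt_trans (leeB h1 h2) hv.
rewrite -EFinB lte_fin !idotD !idotZ opprD addrACA subrr add0r -mulrBr => h.
have -> : f / s + e = (f + s * e) / s.
  by rewrite mulrDl mulrAC divff ?mul1r // gt_eqF.
by rewrite ler_pdivlMr // mulrC ltW.
Qed.


Lemma Flt_prop k : (@Flt R k) = +oo%E \/ exists f : R, [/\ 0 <= f, (@Flt R k) = f%:E &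
  forall B : set 'rV[R]_k, validB B -> (width B <= f%:E)%E].
Proof.
have [->|hne] := eqVneq (@Flt R k) +oo%E; first by left.
right.
have lb : forall B : set 'rV[R]_k, validB B -> (width B <= (@Flt R k))%E.
  move=> B [cB clB iB lB]; apply: le_ereal_inf_tmp => _ [lam [_ Hl] <-].
  exact: Hl.
have ge0 : (0 <= (@Flt R k) :> \bar R)%E.
  by apply: le_ereal_inf_tmp => _ [lam [l0 _] <-]; rewrite lee_fin.
have fin : (@Flt R k) \is a fin_num.
  rewrite ge0_fin_numE // lt_neqAle hne; exact: leey.
exists (fine ((@Flt R k))); split.
- by rewrite -lee_fin fineK.
- by rewrite fineK.
- by move=> B vB; rewrite fineK //; exact: lb.
Qed.
Lemma core_valid k (V : set 'rV[R]_k) t : cvx V -> interior V !=set0 ->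
  V `&` Zlattice k = set0 -> 0 < t -> t < 1 ->
  exists c, exists2 B, validB B & forall y, V y -> B (c + t *: (y - c)).
Proof.
move=> cV [c /nbhs_ballP [r /= r0 hr]] VZ t0 t1.
have hb : forall z, `|c - z| < r -> V z by move=> z /ballE; exact: hr.
pose T x := c + t^-1 *: (x - c).
pose B := [set x | forall e, 0 < e -> exists2 y, V y & `|T x - y| < e].
have tK : forall x, c + t *: (T x - c) = x.
  move=> x; apply/rowP => j; rewrite !mxE /=; field; by rewrite gt_eqF.
exists c; exists B; last first.
  move=> y Vy e e0; exists y => //.
  have -> : T (c + t *: (y - c)) = y.
    apply/rowP => j; rewrite !mxE /=; field; by rewrite gt_eqF.
  by rewrite subrr normr0.
split.
- apply/convexP => x1 x2 l B1 B2 l0 l1 e e0.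
  have [y1 V1 h1] := B1 _ (divr_gt0 e0 (ltr0Sn _ 1)).
  have [y2 V2 h2] := B2 _ (divr_gt0 e0 (ltr0Sn _ 1)).
  exists (l *: y1 + (1 - l) *: y2); first exact: cV.
  have -> : T (l *: x1 + (1 - l) *: x2) - (l *: y1 + (1 - l) *: y2) =
     l *: (T x1 - y1) + (1 - l) *: (T x2 - y2).
    apply/rowP => j; rewrite !mxE /=; field; by rewrite gt_eqF.
  apply: (le_lt_trans (ler_normD _ _)); rewrite !normrZ.
  rewrite (ger0_norm l0) (@ger0_norm _ (1 - l) ltac:(by rewrite subr_ge0)).
  apply: (le_lt_trans (y := l * (e / 2) + (1 - l) * (e / 2))).
    by apply: lerD; apply: ler_wpM2l; rewrite ?subr_ge0 //; apply: ltW.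
  rewrite -mulrDl subrKC mul1r; lra.
- move=> x clx e e0.
  have [x' [Bx' hx']] : exists x', B x' /\ ball x (t * (e / 2)) x'.
    have := clx _ (nbhsx_ballx x _ (mulr_gt0 t0 (divr_gt0 e0 (ltr0Sn _ 1)))).
    by case=> x' [? ?]; exists x'.
  have [y Vy hy] := Bx' _ (divr_gt0 e0 (ltr0Sn _ 1)).
  exists y => //.
  have -> : T x - y = t^-1 *: (x - x') + (T x' - y).
    apply/rowP => j; rewrite !mxE /=; field; by rewrite gt_eqF.
  apply: (le_lt_trans (ler_normD _ _)); rewrite normrZ.
  move/ballE: hx' => hx'.
  rewrite (@gtr0_norm _ t^-1 ltac:(by rewrite invr_gt0)).
  have h3 : t^-1 * `|x - x'| < e / 2 by rewrite mulrC ltr_pdivrMr // mulrC.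
  move: h3 hy; lra.
- exists c; apply/nbhs_ballP; exists (t * r); first exact: mulr_gt0.
  move=> x /ballE hx e e0; exists (T x) => //; last by rewrite subrr normr0.
  apply: hb; rewrite /T opprD addrA subrr add0r normrN normrZ.
  rewrite (@gtr0_norm _ t^-1 ltac:(by rewrite invr_gt0)) distrC.
  by rewrite mulrC ltr_pdivrMr // mulrC.
- rewrite -subset0 => x [Bx Zx].
  have : V x.
    rewrite -(tK x); apply: (intcl cV r0 hb) => //.
  by move=> Vx; have : (V `&` Zlattice k) x by []; rewrite VZ.
Qed.

Lemma idotE k (v : 'rV[int]_k) (y : 'rV[R]_k) :
  idot v y = (y *m (map_mx (intr : int -> R) v)^T) 0 0.
Proof. by rewrite /idot !mxE; apply: eq_bigr => j _; rewrite !mxE mulrC. Qed.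

Lemma int_kernel k n (M : 'M[R]_(n, k)) : (\rank M < k)%N ->
  (forall i j, M i j \is a Num.int) ->
  exists2 v : 'rV[int]_k, v != 0 & forall x : 'rV[R]_n, idot v (x *m M) = 0.
Proof.
move=> rkM Mint.
pose MQ : 'M[rat]_(n, k) := \matrix_(i, j) (Num.floor (M i j))%:~R.
have eM : map_mx (@ratr R) MQ = M.
  by apply/matrixP => i j; rewrite !mxE ratr_int floorK.
have rk : \rank MQ = \rank M by rewrite -eM mxrank_map.
pose K := kermx MQ^T.
have rK : (0 < \rank K)%N by rewrite mxrank_ker mxrank_tr rk subn_gt0.
have [i Hi] : exists i, row i K != 0.
  apply/existsP; apply: contraTT rK; rewrite negb_exists => /forallP H.
  have -> : K = 0 by apply/row_matrixP => i; rewrite row0; apply/eqP; move: (H i); rewrite negbK.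
  by rewrite mxrank0.
pose w := row i K.
have wM : w *m MQ^T = 0 by rewrite /w -row_mul mulmx_ker row0.
have Hw : w != 0 by [].
clearbody w; clear Hi.
pose v : 'rV[int]_k := \row_j (numq (w 0 j) * \prod_(j' | j' != j) denq (w 0 j')).
pose d : rat := \prod_j (denq (w 0 j))%:~R.
have ev : map_mx intr v = d *: w.
  apply/rowP => j; rewrite !mxE rmorphM rmorph_prod /d [X in _ = X * _](bigD1 j) //= numqE.
  ring.
have dne : d != 0.
  by rewrite /d prodf_seq_neq0; apply/allP => j _ /=; rewrite intr_eq0 denq_neq0.
exists v.
  apply: contra Hw => /eqP v0.
  have : map_mx (intr : int -> rat) v = 0 by rewrite v0; apply/rowP => j; rewrite !mxE.
  by rewrite ev => /eqP; rewrite scaler_eq0 (negbTE dne).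
move=> x; rewrite idotE.
have eV : map_mx (intr : int -> R) v = map_mx (@ratr R) (map_mx intr v).
  by apply/rowP => j; rewrite !mxE ratr_int.
have MQw : MQ *m (map_mx intr v)^T = 0.
  have -> : (map_mx intr v)^T = d *: w^T by rewrite ev; apply/matrixP => a b; rewrite !mxE.
  by rewrite -scalemxAr -(trmxK MQ) -trmx_mul wM trmx0 scaler0.
have MV : M *m (map_mx (intr : int -> R) v)^T = 0.
  by rewrite eV -eM map_trmx -map_mxM MQw map_mx0.
by rewrite -mulmxA MV mulmx0 mxE.
Qed.

Lemma dichotomy k (L : set 'rV[R]_k) p0 : L `<=` Zlattice k -> L p0 ->
  (exists2 v : 'rV[int]_k, v != 0 & forall p, L p -> idot v p = idot v p0) \/
  (exists M : 'M[R]_k, M \in unitmx /\ forall i, L (p0 + row i M)).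
Proof.
move=> LZ Lp0.
pose P n := `[< exists M : 'M[R]_(n, k), row_free M /\ forall i, L (p0 + row i M) >].
have P0 : exists n, P n.
  exists 0%N; apply/asboolP; exists 0; split; first by rewrite /row_free mxrank0.
  by case.
have Pub : forall n, P n -> (n <= k)%N.
  move=> n /asboolP [M [rf _]]; move/eqP: rf => <-; exact: rank_leq_col.
case: (ex_maxnP P0 Pub) => n /asboolP [M [rfM LM]] maxn.
have [nk|nk] := eqVneq n k.
  right; subst n; exists M; split => //; by rewrite -row_free_unit.
left.
have nk' : (n < k)%N by rewrite ltn_neqAle nk /=; apply: Pub; apply/asboolP; exists M.
have inM : forall p, L p -> (p - p0 <= M)%MS.
  move=> p Lp; case: (boolP (p - p0 <= M)%MS) => // notin; exfalso.
  pose M' := col_mx M (p - p0).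
  have rf' : row_free M'.
    have h := mxrank_leqif_sup (addsmxSl M (p - p0)).
    have lt : (\rank M < \rank (M + (p - p0)%R)%MS)%N.
      by rewrite ltn_neqAle h.2 h.1 addsmx_sub submx_refl (negbTE notin).
    move: lt; rewrite addsmxE (eqP rfM) => lt.
    rewrite /row_free /M' eqn_leq rank_leq_row /=; move: lt; rewrite -addn1 => lt; exact: lt.
  have : P (n + 1)%N.
    apply/asboolP; exists M'; split => // i.
    rewrite -[i](@splitK n 1); case: (fintype.split i) => j /=.
      by rewrite rowKu; exact: LM.
    rewrite rowKd (ord1 j).
    have -> : row 0 (p - p0) = p - p0 by apply/rowP => j'; by rewrite mxE.
    by rewrite addrC subrK.
  by move/maxn; rewrite addn1 ltnn.
have Mint : forall i j, M i j \is a Num.int.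
  move=> i j.
  have -> : M i j = (p0 + row i M) 0 j - p0 0 j by rewrite !mxE addrC addKr.
  by apply: rpredB; [exact: (LZ _ (LM i) j)|exact: (LZ _ Lp0 j)].
have rk : (\rank M < k)%N by rewrite (eqP rfM).
have [v v0 hv] := int_kernel rk Mint.
exists v => // p Lp.
have /submxP [lam elam] := inM p Lp.
by have /eqP := hv lam; rewrite -elam idotB subr_eq0 => /eqP.
Qed.

Lemma entry_le_norm k (x : 'rV[R]_k) j : `|x 0 j| <= `|x|.
Proof.
rewrite [leRHS]/Num.Def.normr /= mx_normrE; apply/bigmax_geP; right => /=.
by exists (0, j).
Qed.

Lemma cvx_comb k (U : set 'rV[R]_k) p0 : cvx U -> U p0 ->
  forall n (p : 'I_n -> 'rV[R]_k) (lam : 'I_n -> R),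
  (forall i, U (p i)) -> (forall i, 0 <= lam i) -> \sum_i lam i <= 1 ->
  U (p0 + \sum_i lam i *: (p i - p0)).
Proof.
move=> cU Up0; elim=> [|n IH] p lam Up l0 ls.
  by rewrite big_ord0 addr0.
rewrite big_ord_recr /=; rewrite big_ord_recr /= in ls.
set a := lam ord_max in ls *.
have a1 : a <= 1.
  apply: le_trans ls; rewrite lerDr; apply: sumr_ge0 => i _; exact: l0.
have [ea|ea] := eqVneq a 1.
  have z : forall i : 'I_n, lam (widen_ord (leqnSn n) i) = 0.
    move=> i; apply/eqP; move: ls; rewrite ea -lerBrDr subrr => ls.
    have s0 : \sum_(i < n) lam (widen_ord (leqnSn n) i) = 0.
      by apply/eqP; rewrite eq_le ls sumr_ge0.
    by move/eqP: s0; rewrite psumr_eq0 // => /allP /(_ i (mem_index_enum _)) /implyP; apply.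
  rewrite big1; last by move=> i _; rewrite z scale0r.
  by rewrite add0r ea scale1r addrC subrK.
have a1' : 0 < 1 - a by rewrite subr_gt0 lt_neqAle ea a1.
pose lam' i := lam (widen_ord (leqnSn n) i) / (1 - a).
have := IH (fun i => p (widen_ord (leqnSn n) i)) lam' (fun i => Up _)
  (fun i => divr_ge0 (l0 _) (ltW a1')).
have -> : \sum_(i < n) lam' i = (\sum_(i < n) lam (widen_ord (leqnSn n) i)) / (1 - a).
  by rewrite /lam' mulr_suml.
rewrite ler_pdivrMr // mul1r lerBrDr => /(_ ls).
have -> : \sum_(i < n) lam' i *: (p (widen_ord (leqnSn n) i) - p0) =
  (1 - a)^-1 *: \sum_(i < n) lam (widen_ord (leqnSn n) i) *: (p (widen_ord (leqnSn n) i) - p0).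
  by rewrite scaler_sumr; apply: eq_bigr => i _; rewrite scalerA mulrC.
move: (\sum_(i < n) _) => S Uy.
have -> : p0 + (S + a *: (p ord_max - p0)) =
   a *: p ord_max + (1 - a) *: (p0 + (1 - a)^-1 *: S).
  apply/rowP => j; rewrite !mxE; field; by rewrite gt_eqF.
apply: cU => //; exact: l0.
Qed.
Lemma full_interior k (U : set 'rV[R]_k) p0 (M : 'M[R]_k) : (0 < k)%N -> cvx U ->
  U p0 -> M \in unitmx -> (forall i, U (p0 + row i M)) -> interior U !=set0.
Proof.
move=> k0 cU Up0 uM UM.
have kr : 0 < k%:R :> R by rewrite ltr0n.
pose N := invmx M.
pose C := \sum_i \sum_j `|N i j| + 1.
have C0 : 0 < C.
  by rewrite /C ltr_pwDr // sumr_ge0 // => i _; rewrite sumr_ge0.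
pose c0 : R := (2 * k%:R)^-1.
pose q := p0 + const_mx c0 *m M.
pose rho := (4 * k%:R * C)^-1.
have rho0 : 0 < rho by rewrite invr_gt0 !mulr_gt0.
exists q; apply/nbhs_ballP; exists rho => //= x /ballE hx.
pose lam := (x - p0) *m N.
have ex : x = p0 + \sum_i lam 0 i *: ((p0 + row i M) - p0).
  have e1 : lam *m M = x - p0 by rewrite /lam -mulmxA mulVmx // mulmx1.
  under eq_bigr => i _ do rewrite [p0 + _]addrC addrK.
  by rewrite -mulmx_sum_row e1 addrC subrK.
have bound : forall i, `|lam 0 i - c0| < (4 * k%:R)^-1.
  move=> i.
  have -> : lam 0 i - c0 = ((x - q) *m N) 0 i.
    have -> : (x - q) *m N = lam - const_mx c0.
      by rewrite /q /lam opprD addrA mulmxBl -mulmxA mulmxV // mulmx1.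
    by rewrite !mxE.
  rewrite mxE.
  apply: (le_lt_trans (ler_norm_sum _ _ _)).
  apply: (le_lt_trans (y := `|x - q| * C)).
    apply: (le_trans (y := \sum_j `|x - q| * `|N j i|)).
      apply: ler_sum => j _; rewrite normrM; apply: ler_wpM2r => //.
      exact: entry_le_norm.
    rewrite -mulr_sumr; apply: ler_wpM2l => //.
    rewrite /C; apply: (le_trans (y := \sum_j \sum_i0 `|N j i0|)); last by rewrite lerDl.
    apply: ler_sum => j _.
    rewrite (bigD1 i) //= lerDl; apply: sumr_ge0 => ? _; exact: normr_ge0.
  rewrite distrC in hx.
  have : `|x - q| * C < rho * C by rewrite ltr_pM2r.
  by rewrite /rho invfM mulfVK ?gt_eqF.
rewrite ex; apply: cvx_comb => //.
- move=> i; have := bound i; rewrite ltr_norml => /andP [h _].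
  have : 0 <= c0 - (4 * k%:R)^-1.
    rewrite /c0 subr_ge0 lef_pV2 ?posrE ?mulr_gt0 //.
    by rewrite ler_pM2r // ler_nat.
  move: h; lra.
- apply: (le_trans (y := \sum_(i < k) (c0 + (4 * k%:R)^-1))).
    apply: ler_sum => i _; have := bound i; rewrite ltr_norml => /andP [_ h].
    by move: h; lra.
  rewrite sumr_const card_ord /c0.
  have -> : ((2 * k%:R)^-1 + (4 * k%:R)^-1) *+ k = 3 / 4 :> R.
    rewrite -[LHS]mulr_natr; field; by rewrite gt_eqF.
  lra.
Qed.
Lemma rdist_pick l (A D : set 'rV[R]_l) (d r : R) : A `<=` D -> cvx A ->
  rdist A D = d%:E -> 0 < d -> 0 <= r -> r < d ->
  A !=set0 /\ exists g : 'rV[R]_l -> R,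
   (forall x y t, g (t *: x + (1 - t) *: y) = t * g x + (1 - t) * g y) /\
   exists b W, [/\ D b, 0 <= W, (forall a a', A a -> A a' -> g a - g a' <= W) &
                (forall a, A a -> r * W < g b - g a)].
Proof.
move=> AD cA hr d0 r0 rd.
have A0 : A !=set0.
  apply/set0P; apply/negP => /eqP eA; move: hr; rewrite /rdist (asboolT eA).
  case: ifP => _ h; last by discriminate h.
  by move: d0; rewrite -lte_fin -h ltxx.
split => //.
have nA : ~ (A = set0) by move=> e; case: A0 => a; rewrite e.
move: hr; rewrite /rdist (asboolF nA) => hr.
have : (r%:E < ereal_sup [set rdist_ratio A D pi | pi in [set: {linear 'rV[R]_l -> R^o}]])%E.
  by rewrite hr lte_fin.
case/ereal_sup_gt => _ [pi _ <-].
have [a0 Aa0] := A0.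
rewrite /rdist_ratio.
set den := ereal_sup _.
set num := ereal_sup _.
have hden : forall a a', A a -> A a' -> ((`|pi a - pi a'|)%:E <= den)%E.
  by move=> a a' Aa Aa'; apply: ereal_sup_ubound; exists a => //; exists a'.
have den0 : (0 <= den)%E.
  by apply: le_trans (hden a0 a0 Aa0 Aa0); rewrite subrr normr0.
move=> hrat.
have key : exists b W, [/\ D b, 0 <= W, (forall a a', A a -> A a' -> `|pi a - pi a'| <= W) &
                (forall a, A a -> r * W < `|pi b - pi a|)].
  move: hrat; case: ifP => [_|dy]; first by rewrite lte_fin ltNge r0.
  case: ifP => [/eqP dz|dnz].
    case: ifP => [_|nn0]; first by rewrite lte_fin ltNge r0.
    move=> _.
    have num0 : (0 < num)%E.
      rewrite lt_neqAle eq_sym nn0 /=.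
      apply: ereal_sup_ge; exists (ereal_inf [set (`|pi a0 - pi a|)%:E | a in A]).
        by exists a0 => //; exact: AD.
      by apply: le_ereal_inf_tmp => _ [a Aa <-]; rewrite lee_fin.
    case/ereal_sup_gt: num0 => _ [b Db <-] hb.
    exists b, 0; split => //.
      by move=> a a' Aa Aa'; have := hden a a' Aa Aa'; rewrite dz lee_fin.
    move=> a Aa; rewrite mulr0.
    have : (ereal_inf [set (`|pi b - pi a|)%:E | a in A] <= (`|pi b - pi a|)%:E)%E.
      by apply: ereal_inf_lbound; exists a.
    by move=> h; have := lt_le_trans hb h; rewrite lte_fin.
  have finD : den \is a fin_num by rewrite ge0_fin_numE // lt_neqAle dy leey.
  have eW : den = (fine den)%:E by rewrite fineK.
  move: (fine den) eW dnz dy => W eW dnz dy.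
  move=> hr'.
  have W0 : 0 < W.
    by rewrite lt_neqAle eq_sym; move: dnz den0; rewrite eW eqe => -> /=; rewrite lee_fin.
  have : ((r * W)%:E < num)%E.
    rewrite ltNge; apply/negP => hn.
    have := lee_wpmul2r (x := (W^-1)%:E) _ hn; rewrite lee_fin invr_ge0 ltW //.
    move=> /(_ isT); rewrite -EFinM mulrK ?unitfE ?gt_eqF //.
    by move=> h; have := lt_le_trans hr' h; rewrite ltxx.
  case/ereal_sup_gt => _ [b Db <-] hb.
  exists b, W; split => //; first exact: ltW.
    by move=> a a' Aa Aa'; have := hden a a' Aa Aa'; rewrite eW lee_fin.
  move=> a Aa.
  have : (ereal_inf [set (`|pi b - pi a|)%:E | a in A] <= (`|pi b - pi a|)%:E)%E.
    by apply: ereal_inf_lbound; exists a.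
  by move=> h; have := lt_le_trans hb h; rewrite lte_fin.
have [b [W [Db W0 hW hb]]] := key.
have lin : forall x y t, pi (t *: x + (1 - t) *: y) = t * pi x + (1 - t) * pi y.
  by move=> x y t; rewrite linearD !linearZ.
have rW0 : 0 <= r * W by rewrite mulr_ge0.
have ivt : forall a1 a2, A a1 -> A a2 -> pi a1 < pi b -> pi b < pi a2 -> False.
  move=> a1 a2 A1 A2 h1 h2.
  pose t := (pi a2 - pi b) / (pi a2 - pi a1).
  have d12 : 0 < pi a2 - pi a1 by rewrite subr_gt0; exact: lt_trans h1 h2.
  have t0 : 0 <= t by apply: divr_ge0; [rewrite subr_ge0; exact: ltW|exact: ltW].
  have t1 : t <= 1 by rewrite ler_pdivrMr // mul1r lerD2l lerN2 ltW.
  have := hb _ (cA _ _ _ A1 A2 t0 t1).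
  have -> : pi (t *: a1 + (1 - t) *: a2) = pi b.
    rewrite lin /t; field; by rewrite gt_eqF.
  by rewrite subrr normr0 ltNge rW0.
pose s : R := if pi a0 <= pi b then 1 else -1.
exists (fun x => s * pi x); split.
  by move=> x y t; rewrite lin; ring.
exists b, W; split => //.
  move=> a a' Aa Aa'; apply: le_trans (hW a a' Aa Aa'); rewrite -mulrBr /s.
  by case: ifP => _; rewrite ?mul1r ?mulN1r ?ler_norm // -normrN ler_norm.
move=> a Aa; have := hb a Aa; rewrite -mulrBr /s.
have hb0 := hb a0 Aa0.
case: ifP => h0.
  have lt0 : pi a0 < pi b.
    rewrite lt_neqAle h0 andbT; apply/negP => /eqP e.
    by move: hb0; rewrite e subrr normr0 ltNge rW0.
  have : pi a <= pi b.
    by rewrite leNgt; apply/negP => ha; exact: (ivt a0 a).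
  by rewrite -subr_ge0 => /ger0_norm ->; rewrite mul1r.
have lt0 : pi b < pi a0 by rewrite ltNge h0.
have : pi b <= pi a.
  by rewrite leNgt; apply/negP => ha; exact: (ivt a a0).
by rewrite -subr_le0 => /ler0_norm ->; rewrite mulN1r.
Qed.
Lemma affine_comb l k (sigma : 'rV[R]_l -> 'rV[R]_k) : affine_map sigma ->
  forall x y t, sigma (t *: x + (1 - t) *: y) = t *: sigma x + (1 - t) *: sigma y.
Proof.
move=> [M [c hs]] x y t; rewrite !hs mulmxDl -!scalemxAl.
move: (x *m M) (y *m M) => X Y; apply/rowP => j; rewrite !mxE; ring.
Qed.

Lemma cvx_image l k (f : 'rV[R]_l -> 'rV[R]_k) (A : set 'rV[R]_l) :
  (forall x y t, f (t *: x + (1 - t) *: y) = t *: f x + (1 - t) *: f y) ->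
  cvx A -> cvx (f @` A).
Proof.
move=> hf cA _ _ t [x Ax <-] [y Ay <-] t0 t1.
by exists (t *: x + (1 - t) *: y); [exact: cA | rewrite hf].
Qed.

Lemma Vfree l k (D A : set 'rV[R]_l) (sigma : 'rV[R]_l -> 'rV[R]_k) g b W r :
  cvx D -> (forall x y t, sigma (t *: x + (1 - t) *: y) = t *: sigma x + (1 - t) *: sigma y) ->
  A `<=` D -> (forall x, D x -> Zlattice k (sigma x) -> A x) ->
  (forall x y t, g (t *: x + (1 - t) *: y) = t * g x + (1 - t) * g y) ->
  D b -> 0 < r -> (forall a a', A a -> A a' -> g a - g a' <= W) ->
  (forall a, A a -> r * W < g b - g a) ->
  [set sigma b + (r / (1 + r)) *: (u - sigma b) | u in sigma @` A] `&` Zlattice k = set0.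
Proof.
move=> cD hs AD DZA hg Db r0 hW hb.
rewrite -subset0 => _ [[_ [a Aa <-] <-] Z].
set mu := r / (1 + r).
have mu0 : 0 <= mu by rewrite divr_ge0 ?addr_ge0 ?ltW.
have mu1 : mu <= 1 by rewrite ler_pdivrMr ?addr_gt0 // mul1r lerDr.
pose x := mu *: a + (1 - mu) *: b.
have ex : sigma x = sigma b + mu *: (sigma a - sigma b).
  rewrite /x hs; move: (sigma a) (sigma b) => X Y; apply/rowP => j; rewrite !mxE; ring.
have Dx : D x by apply: cD => //; exact: AD.
have Ax : A x by apply: DZA => //; rewrite ex.
have e1 : g x - g a = (1 - mu) * (g b - g a) by rewrite /x hg; ring.
have e2 : g b - g x = mu * (g b - g a) by rewrite /x hg; ring.
have e3 : mu = r * (1 - mu) by rewrite /mu; field; rewrite gt_eqF // addr_gt0.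
have h1 := hW _ _ Ax Aa; have h2 := hb _ Ax.
rewrite e1 in h1; rewrite e2 e3 -mulrA in h2.
have := ler_wpM2l (ltW r0) h1.
by rewrite leNgt h2.
Qed.
Lemma V_interior k (U : set 'rV[R]_k) q mu : 0 < mu -> interior U !=set0 ->
  interior [set q + mu *: (u - q) | u in U] !=set0.
Proof.
move=> mu0 [c /nbhs_ballP [r /= r0 hr]].
exists (q + mu *: (c - q)); apply/nbhs_ballP; exists (mu * r) => /=; first exact: mulr_gt0.
move=> z /ballE hz; exists (q + mu^-1 *: (z - q)).
  apply: hr; apply/ballE.
  have -> : c - (q + mu^-1 *: (z - q)) = mu^-1 *: (q + mu *: (c - q) - z).
    move: c q z {hz}; move=> c q z; apply/rowP => j; rewrite !mxE; field; by rewrite gt_eqF.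
  rewrite normrZ gtr0_norm ?invr_gt0 // mulrC ltr_pdivrMr //.
  by rewrite mulrC.
apply/rowP => j; rewrite !mxE; field; by rewrite gt_eqF.
Qed.

Lemma limit_step (w : \bar R) f s0 : 0 <= f -> 0 < s0 ->
  (forall s, 0 < s -> s < s0 -> (w <= (f / s)%:E)%E) -> (w <= (f / s0)%:E)%E.
Proof.
move=> f0 s00 H; apply/lee_addgt0Pr => e e0.
have [fz|fp] := eqVneq f 0.
  subst f; have := H (s0 / 2) (divr_gt0 s00 (ltr0Sn _ 1)) ltac:(lra).
  by rewrite !mul0r => h; apply: le_trans h _; rewrite add0r lee_fin ltW.
have fp' : 0 < f by rewrite lt_neqAle eq_sym fp f0.
have q0 : 0 < f / s0 + e by rewrite addr_gt0 // divr_gt0.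
have hs : f / (f / s0 + e) < s0.
  rewrite ltr_pdivrMr // mulrDr mulrCA divff ?gt_eqF // mulr1 ltrDl.
  exact: mulr_gt0.
have := H _ (divr_gt0 fp' q0) hs.
have -> : f / (f / (f / s0 + e)) = f / s0 + e.
  by field; rewrite !gt_eqF // addr_gt0 // mulr_gt0.
move=> h; rewrite -EFinD; exact: h.
Qed.
End H.

Theorem mainTheorem10 (R : realType) (l k : nat) (D : set 'rV[R]_l)
    (sigma : 'rV[R]_l -> 'rV[R]_k) (delta : R) :
  (0 < l)%N -> (0 < k)%N ->
  convex_set (D : set (convex_lmodType 'rV[R]_l)) ->
  affine_map sigma ->
  rdist (convhull (D `&` sigma @^-1` Zlattice k)) D = delta%:E ->
  0 < delta ->
  (width (sigma @` convhull (D `&` sigma @^-1` Zlattice k))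
     <= ((1 + delta) / delta)%:E * Flt k)%E.
Proof.
move=> l0 k0 cD0 afs hr d0.
set S := D `&` sigma @^-1` Zlattice k.
set A := convhull S.
set U := sigma @` A.
have cD : cvx D by apply/convexP.
have affs := affine_comb afs.
have cA : cvx A by apply/convexP; exact: convhull_convex.
have AD : A `<=` D by apply: convhull_min => // x [].
have SA : S `<=` A by exact: convhull_sub.
have cU : cvx U by exact: cvx_image.
have c0 : 0 < (1 + delta) / delta by rewrite divr_gt0 // addr_gt0.
case: (Flt_prop R k) => [-> | [f [f0 eF hF]]].
  by rewrite gt0_muley ?leey // lte_fin.
rewrite eF -EFinM.
have [A0 _] := rdist_pick AD cA hr d0 (lexx 0) d0.
have [s0 Ss0] : S !=set0.
  apply/set0P/negP => /eqP S0; case: A0 => a Aa.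
  have h : convhull S `<=` (set0 : set 'rV[R]_l).
    apply: convhull_min; first by apply/convexP => x y t [].
    by rewrite S0.
  exact: (h a Aa).
pose L := sigma @` S.
have LZ : L `<=` Zlattice k by move=> _ [x [_ Zx] <-].
have LU : L `<=` U by move=> _ [x Sx <-]; exists x => //; exact: SA.
have U0 : U !=set0 by exists (sigma s0); apply: LU; exists s0.
case: (dichotomy LZ (p0 := sigma s0) ltac:(by exists s0)) => [[v v0 hv]|[M [uM hM]]].
  have AH : A `<=` [set x | idot v (sigma x) = idot v (sigma s0)].
    apply: convhull_min.
      apply/convexP => x y t hx hy _ _ /=.
      by rewrite affs idotD !idotZ hx hy -mulrDl subrKC mul1r.
    by move=> x Sx /=; apply: hv; exists x.
  apply: (le_trans (ereal_inf_lbound _)); first by exists v.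
  apply: (le_trans (diam_le (c := 0) U0 _)).
    by move=> _ _ [x1 A1 <-] [x2 A2 <-]; rewrite (AH _ A1) (AH _ A2) subrr.
  by rewrite lee_fin mulr_ge0 // ltW.
have iU : interior U !=set0.
  apply: (full_interior k0 cU (LU _ _) uM) => [|i]; first by exists s0.
  exact: LU.
pose z0 := delta / (1 + delta).
have z00 : 0 < z0 by rewrite divr_gt0 // addr_gt0.
have z01 : z0 < 1 by rewrite ltr_pdivrMr ?addr_gt0 // mul1r ltrDr.
have -> : (1 + delta) / delta * f = f / z0.
  by rewrite /z0 invf_div mulrC.
apply: limit_step => // s sp sz0.
pose mu := (s + z0) / 2.
have smu : s < mu by rewrite /mu; lra.
have muz0 : mu < z0 by rewrite /mu; lra.
have mu0 : 0 < mu by lra.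
have mu1 : mu < 1 by lra.
pose r := mu / (1 - mu).
have r0 : 0 < r by rewrite divr_gt0 // subr_gt0.
have rd : r < delta.
  rewrite /r ltr_pdivrMr ?subr_gt0 //.
  move: muz0; rewrite /z0 ltr_pdivlMr ?addr_gt0 // => h.
  rewrite mulrBr mulr1 mulrDr mulr1 in h *; rewrite [delta * mu]mulrC; lra.
have rmu : r / (1 + r) = mu.
  by rewrite /r; field; rewrite !gt_eqF // ?subr_gt0 //; lra.
have [_ [g [hg [b [W [Db W0 hW hb]]]]]] := rdist_pick AD cA hr d0 (ltW r0) rd.
pose V := [set sigma b + mu *: (u - sigma b) | u in U].
have VZ : V `&` Zlattice k = set0.
  rewrite /V -rmu; apply: (Vfree cD affs AD _ hg Db r0 hW hb).
  by move=> x Dx Zx; apply: SA.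
have cV : cvx V.
  apply: cvx_image => // x y t.
  by move: (sigma b) => q; apply/rowP => j; rewrite !mxE; ring.
have iV : interior V !=set0 by exact: V_interior.
pose t := s / mu.
have t0 : 0 < t by rewrite divr_gt0.
have t1 : t < 1 by rewrite ltr_pdivrMr // mul1r.
have [c [B vB hB]] := core_valid cV iV VZ t0 t1.
have wB := hF B vB.
apply: (width_scale_le (z := c + t *: (sigma b - mu *: sigma b - c)) sp U0 _ wB).
move=> u Uu.
have := hB (sigma b + mu *: (u - sigma b)) (ex_intro2 _ _ u Uu erefl).
have eq : forall q c u : 'rV[R]_k, c + t *: (q + mu *: (u - q) - c) =
          c + t *: (q - mu *: q - c) + s *: u.
  move=> q c' u'; apply/rowP => j; rewrite !mxE /t.
  by field; rewrite gt_eqF.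
by rewrite eq.
Qed.
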